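(* Let $(\Omega,\mathcal{F},P)=([0,1],\mathcal{B}([0,1]),\lambda)$ with $\lambda$ Lebesgue measure. For $n\in\mathbb{N}$ and $\varepsilon_n\in(0,1)$ define $S^n_1(\omega)=-\frac{1}{\sqrt{\omega}}$ for $\omega\in[0,\varepsilon_n)$ and $S^n_1(\omega)=\frac{1}{(1-\omega)^{1/(n+1)}}$ for $\omega\in[\varepsilon_n,1]$. Then the sequence $(\varepsilon_n)\subset(0,1)$ can be chosen such that $E[S^n_1]=1$ for all $n\in\mathbb{N}$ and $\varepsilon_n\to0$ as $n\to\infty$. *)

(* Defs.v *)
From HB Require Import structures.
From mathcomp Require Import all_boot all_order all_algebra.
From mathcomp Require Import all_classical all_reals all_analysis.
Set Implicit Arguments. Unset Strict Implicit. Unset Printing Implicit Defensive.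
Import Order.TTheory GRing.Theory Num.Theory.
Local Open Scope ring_scope.

Definition S1 {R : realType} (n : nat) (eps : R) (w : R) : R :=
  if w < eps then - (1 / Num.sqrt w)
  else 1 / ((1 - w) `^ (1 / (n%:R + 1))).

(* Main.v *)
Require Import Defs.
From HB Require Import structures.
From mathcomp Require Import all_boot all_order all_algebra.
From mathcomp Require Import all_classical all_reals all_analysis.
From mathcomp Require Import ring lra measurable_realfun.
Import Order.TTheory GRing.Theory Num.Theory.
Import numFieldNormedType.Exports.
Local Open Scope classical_set_scope.
Local Open Scope ring_scope.

Section H.
Context {R : realType}.
Notation mu := (@lebesgue_measure R).

Lemma small_tail (d y : R) : 0 < y -> forall i : nat,
  (Num.truncn (d / y) <= i)%N -> d / i.+2%:R < y.
Proof.
move=> y0 i; rewrite truncn_le_nat => h.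
rewrite ltr_pdivrMr ?ltr0n//.
have h' : d < i.+1%:R * y by rewrite -ltr_pdivrMr.
have : i.+1%:R <= i.+2%:R :> R by rewrite ler_nat.
nra.
Qed.

Lemma improper_left (f F : R -> R) (a b : R) : a < b ->
  (forall x, a < x <= b -> 0 <= f x) ->
  (forall x, a < x <= b -> f z @[z --> x] --> f x) ->
  (forall x, a < x <= b -> is_derive x 1 F (f x)) ->
  F x @[x --> a^'+] --> F a ->
  (\int[mu]_(x in `]a, b]) (f x)%:E = (F b - F a)%:E)%E.
Proof.
move=> ab f0 cf dF Fa.
have dFc x : a < x <= b -> derivable F x 1 by move=> /dF [].
pose c (i : nat) := a + (b - a) / i.+2%:R.
have cP i : a < c i < b.
  have k2 : 2 <= i.+2%:R :> R by rewrite ler_nat.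
  have kk : i.+2%:R != 0 :> R by rewrite pnatr_eq0.
  set k := i.+2%:R in k2 kk *.
  have e : (b - a) / k * k = b - a by rewrite divfK.
  have d0 : 0 < (b - a) / k by rewrite divr_gt0 ?subr_gt0// (lt_le_trans _ k2).
  rewrite /c; apply/andP; split; first by rewrite ltrDl.
  set d := (b - a) / k in e d0 *. nra.
have Ei i : (\int[mu]_(x in `[c i, b]) (f x)%:E = (F b - F (c i))%:E)%E.
  have /andP[ci cib] := cP i.
  apply: continuous_FTC2 => //.
  - apply: continuous_in_subspaceT => x; rewrite inE/= in_itv/= => /andP[h1 h2].
    by apply: cf; rewrite h2 (lt_le_trans ci h1).
  - split.
    + move=> x; rewrite in_itv/= => /andP[h1 h2].
      by apply: dFc; rewrite (ltW h2) (lt_trans ci h1).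
    + apply: cvg_at_right_filter.
      apply: differentiable_continuous; apply/derivable1_diffP.
      by apply: dFc; rewrite ci ltW.
    + apply: cvg_at_left_filter.
      apply: differentiable_continuous; apply/derivable1_diffP.
      by apply: dFc; rewrite ab lexx.
  - move=> x; rewrite in_itv/= => /andP[h1 h2].
    have := dF x; rewrite (lt_trans ci h1) (ltW h2) => /(_ isT) H.
    by rewrite derive1E derive_val.
have cvgc : c i @[i --> \oo] --> a.
  apply/cvgrPdist_lt => e e0; near=> i.
  rewrite /c opprD addrA subrr add0r normrN ger0_norm; last first.
    by rewrite divr_ge0 ?subr_ge0 ?ltW.
  near: i; exists (Num.truncn ((b - a) / e)) => // i /= hi.
  exact: small_tail.
have cvgF : ((F b - F (c i))%:E)%E @[i --> \oo] --> (F b - F a)%:E.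
  apply: cvg_EFin; first exact: nearW.
  apply: cvgB; first exact: cvg_cst.
  move/cvg_at_rightP : Fa; apply; split => // n.
  by have /andP[] := cP n.
have cfi i : {within `[c i, b], continuous f}.
  have /andP[ci cib] := cP i.
  apply: continuous_in_subspaceT => x; rewrite inE/= in_itv/= => /andP[h1 h2].
  by apply: cf; rewrite h2 (lt_le_trans ci h1).
have U : \bigcup_i [set` `[c i, b]] = [set` `]a, b]].
  apply/seteqP; split => x /=.
    move=> [i _]; rewrite /= !in_itv/= => /andP[h1 ->]; rewrite andbT.
    have /andP[ci _] := cP i; exact: lt_le_trans ci h1.
  rewrite in_itv/= => /andP[h1 h2].
  exists (Num.truncn ((b - a) / (x - a))) => //=.
  rewrite in_itv/= h2 andbT /c -lerBrDl ltW//.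
  by apply: small_tail => //; rewrite subr_gt0.
have nd : {homo (fun i : nat => [set` `[c i, b]]) : n m / (n <= m)%N >-> (n <= m)%O}.
  move=> n m nm; rewrite subsetEset => x /=; rewrite !in_itv/= => /andP[h1 ->].
  rewrite andbT (le_trans _ h1)// /c lerD2l ler_pM2l ?subr_gt0//.
  by rewrite lef_pV2 ?posrE ?ltr0n// ler_nat.
have := @ge0_nondecreasing_set_cvg_integral _ (measurableTypeR R) R (fun i => [set` `[c i, b]]) (EFin \o f) mu nd.
move=> /(_ _ _ _) H.
have {H} := H (fun i => measurable_itv _).
move=> /(_ _ _) H.
have {H} : (\int[mu]_(x in [set` `[c i, b]]) (EFin \o f) x)%E @[i --> \oo] --> 
    (\int[mu]_(x in \bigcup_i [set` `[c i, b]]) (EFin \o f) x)%E.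
  apply: H.
    move=> i; apply/measurable_EFinP.
    by apply: subspace_continuous_measurable_fun => //; exact: cfi.
  move=> i x /=; rewrite in_itv/= => /andP[h1 h2]; rewrite lee_fin f0//.
  rewrite h2 andbT; have /andP[ci _] := cP i; exact: lt_le_trans ci h1.
rewrite U.
have -> : (fun i => \int[mu]_(x in [set` `[c i, b]]) (EFin \o f) x)%E = (fun i => (F b - F (c i))%:E).
  by apply/funext => i; rewrite -Ei.
by move/(cvg_unique _ cvgF) ->.
Unshelve. all: by end_near.
Qed.
Lemma improper_right (f F : R -> R) (a b : R) : a < b ->
  (forall x, a <= x < b -> 0 <= f x) ->
  (forall x, a <= x < b -> f z @[z --> x] --> f x) ->
  (forall x, a <= x < b -> is_derive x 1 F (f x)) ->
  F x @[x --> b^'-] --> F b ->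
  (\int[mu]_(x in `[a, b[) (f x)%:E = (F b - F a)%:E)%E.
Proof.
move=> ab f0 cf dF Fb.
have dFc x : a <= x < b -> derivable F x 1 by move=> /dF [].
pose c (i : nat) := b - (b - a) / i.+2%:R.
have cP i : a < c i < b.
  have k2 : 2 <= i.+2%:R :> R by rewrite ler_nat.
  have kk : i.+2%:R != 0 :> R by rewrite pnatr_eq0.
  set k := i.+2%:R in k2 kk *.
  have e : (b - a) / k * k = b - a by rewrite divfK.
  have d0 : 0 < (b - a) / k by rewrite divr_gt0 ?subr_gt0// (lt_le_trans _ k2).
  rewrite /c; apply/andP; split; last by rewrite ltrBlDr ltrDl.
  set d := (b - a) / k in e d0 *. nra.
have Ei i : (\int[mu]_(x in `[a, c i]) (f x)%:E = (F (c i) - F a)%:E)%E.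
  have /andP[ac cib] := cP i.
  apply: continuous_FTC2 => //.
  - apply: continuous_in_subspaceT => x; rewrite inE/= in_itv/= => /andP[h1 h2].
    by apply: cf; rewrite h1 (le_lt_trans h2 cib).
  - split.
    + move=> x; rewrite in_itv/= => /andP[h1 h2].
      by apply: dFc; rewrite (ltW h1) (lt_trans h2 cib).
    + apply: cvg_at_right_filter.
      apply: differentiable_continuous; apply/derivable1_diffP.
      by apply: dFc; rewrite ab lexx.
    + apply: cvg_at_left_filter.
      apply: differentiable_continuous; apply/derivable1_diffP.
      by apply: dFc; rewrite cib ltW.
  - move=> x; rewrite in_itv/= => /andP[h1 h2].
    have := dF x; rewrite (ltW h1) (lt_trans h2 cib) => /(_ isT) H.
    by rewrite derive1E derive_val.
have cvgc : c i @[i --> \oo] --> b.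
  apply/cvgrPdist_lt => e e0; near=> i.
  rewrite /c opprB addrC subrK ger0_norm; last first.
    by rewrite divr_ge0 ?subr_ge0 ?ltW.
  near: i; exists (Num.truncn ((b - a) / e)) => // i /= hi.
  exact: small_tail.
have cvgF : ((F (c i) - F a)%:E)%E @[i --> \oo] --> (F b - F a)%:E.
  apply: cvg_EFin; first exact: nearW.
  apply: cvgB; last exact: cvg_cst.
  move/cvg_at_leftP : Fb; apply; split => // n.
  by have /andP[] := cP n.
have cfi i : {within `[a, c i], continuous f}.
  have /andP[ac cib] := cP i.
  apply: continuous_in_subspaceT => x; rewrite inE/= in_itv/= => /andP[h1 h2].
  by apply: cf; rewrite h1 (le_lt_trans h2 cib).
have U : \bigcup_i [set` `[a, c i]] = [set` `[a, b[].
  apply/seteqP; split => x /=.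
    move=> [i _]; rewrite /= !in_itv/= => /andP[-> h1] /=.
    have /andP[_ cb] := cP i; exact: le_lt_trans h1 cb.
  rewrite in_itv/= => /andP[h1 h2].
  exists (Num.truncn ((b - a) / (b - x))) => //=.
  rewrite in_itv/= h1 /= /c lerBrDr -lerBrDl ltW//.
  by apply: small_tail => //; rewrite subr_gt0.
have nd : {homo (fun i : nat => [set` `[a, c i]]) : n m / (n <= m)%N >-> (n <= m)%O}.
  move=> n m nm; rewrite subsetEset => x /=; rewrite !in_itv/= => /andP[-> h1] /=.
  rewrite (le_trans h1)// /c lerD2l lerN2 ler_pM2l ?subr_gt0//.
  by rewrite lef_pV2 ?posrE ?ltr0n// ler_nat.
have := @ge0_nondecreasing_set_cvg_integral _ (measurableTypeR R) R (fun i => [set` `[a, c i]]) (EFin \o f) mu nd.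
move=> /(_ _ _ _) H.
have {H} := H (fun i => measurable_itv _).
move=> /(_ _ _) H.
have {H} : (\int[mu]_(x in [set` `[a, c i]]) (EFin \o f) x)%E @[i --> \oo] --> 
    (\int[mu]_(x in \bigcup_i [set` `[a, c i]]) (EFin \o f) x)%E.
  apply: H.
    move=> i; apply/measurable_EFinP.
    by apply: subspace_continuous_measurable_fun => //; exact: cfi.
  move=> i x /=; rewrite in_itv/= => /andP[h1 h2]; rewrite lee_fin f0//.
  rewrite h1 /=; have /andP[_ cb] := cP i; exact: le_lt_trans h2 cb.
rewrite U.
have -> : (fun i => \int[mu]_(x in [set` `[a, c i]]) (EFin \o f) x)%E = (fun i => (F (c i) - F a)%:E).
  by apply/funext => i; rewrite -Ei.
by move/(cvg_unique _ cvgF) ->.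
Unshelve. all: by end_near.
Qed.

Lemma derivable_cvg (f : R -> R) x : derivable f x 1 -> f z @[z --> x] --> f x.
Proof. by move/derivable1_diffP/differentiable_continuous. Qed.

Lemma is_derive_onem_powR (q x : R) : x < 1 ->
  is_derive x 1 (fun y => (1 - y) `^ q) (- (q * (1 - x) `^ (q - 1))).
Proof.
move=> x1.
have hf : is_derive x 1 (fun y : R => 1 - y) (-1).
  have h : is_derive x 1 (cst 1 - id : R -> R) (0 - 1) by exact: is_deriveB.
  by rewrite sub0r in h.
have hg : is_derive (1 - x) 1 (fun a : R => a `^ q) (q * (1 - x) `^ (q - 1)).
  by apply: is_derive1_powR; rewrite subr_gt0.
have df : derivable (fun y : R => 1 - y) x 1 by case: hf.
have dg : derivable (fun a : R => a `^ q) (1 - x) 1 by case: hg.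
apply: DeriveDef.
  apply/derivable1_diffP.
  apply: (@differentiable_comp _ _ _ _ (fun y : R => 1 - y) (fun a : R => a `^ q)).
    exact/derivable1_diffP.
  exact/derivable1_diffP.
rewrite -derive1E.
rewrite (@derive1_comp _ (fun y : R => 1 - y) (fun a : R => a `^ q)) //.
rewrite !derive1E !derive_val.
by rewrite mulrN1.
Qed.

Lemma IA (e : R) : 0 < e ->
  (\int[mu]_(x in `[0%R, e[) (1 / Num.sqrt x)%:E = (2 * Num.sqrt e)%:E)%E.
Proof.
move=> e0.
have cf (x : R) : 0 < x -> (fun w : R => 1 / Num.sqrt w) z @[z --> x] --> 1 / Num.sqrt x.
  move=> x0.
  have -> : (fun w : R => 1 / Num.sqrt w) = (fun w => (Num.sqrt w)^-1).
    by apply/funext=> w; rewrite div1r.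
  rewrite div1r; apply: continuousV; last exact: sqrt_continuous.
  by rewrite sqrtr_eq0 -ltNge.
have mf : measurable_fun `]0, e[ (EFin \o fun w : R => 1 / Num.sqrt w).
  apply/measurable_EFinP; apply: open_continuous_measurable_fun.
    exact: interval_open.
  by move=> x; rewrite inE/= in_itv/= => /andP[x0 _]; exact: cf.
rewrite -integral_itv_obnd_cbnd // integral_itv_bndo_bndc //.
have h1 : forall x, 0 < x <= e -> 0 <= 1 / Num.sqrt x.
  by move=> x /andP[x0 _]; rewrite divr_ge0 ?sqrtr_ge0.
have h2 : forall x, 0 < x <= e -> (fun w : R => 1 / Num.sqrt w) z @[z --> x] --> 1 / Num.sqrt x.
  by move=> x /andP[x0 _]; exact: cf.
have h3 : forall x, 0 < x <= e -> is_derive x 1 (fun w : R => 2 * Num.sqrt w) (1 / Num.sqrt x).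
  move=> x /andP[x0 _].
  apply: (is_derive_eq (f' := 2 *: (2 * Num.sqrt x)^-1)).
    by apply: is_deriveZ; exact: is_derive1_sqrt.
  rewrite [in LHS]invfM /GRing.scale/= mulrA mulfV ?pnatr_eq0 // mul1r div1r.
have h4 : (fun w : R => 2 * Num.sqrt w) x @[x --> 0^'+] --> 2 * Num.sqrt 0.
  apply: cvg_at_right_filter.
  apply: cvgM; [exact: cvg_cst|exact: sqrt_continuous].
rewrite (improper_left _ _ _ _ e0 h1 h2 h3 h4).
by rewrite sqrtr0 mulr0 subr0.
Qed.

Lemma IB (p e : R) : 0 < p < 1 -> 0 < e < 1 ->
  (\int[mu]_(x in `[e, 1%R]) (1 / (1 - x) `^ p)%:E
    = ((1 - e) `^ (1 - p) / (1 - p))%:E)%E.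
Proof.
move=> /andP[p0 p1] /andP[e0 e1].
set q := 1 - p.
have q0 : 0 < q by rewrite /q subr_gt0.
have fE w : 1 / (1 - w) `^ p = (1 - w) `^ (q - 1).
  by rewrite /q addrAC subrr add0r powRN div1r.
under eq_integral => x _ do rewrite fE.
have cf (x : R) : x < 1 -> (fun w : R => (1 - w) `^ (q - 1)) z @[z --> x] --> (1 - x) `^ (q - 1).
  move=> x1; apply: derivable_cvg.
  by have [] := is_derive_onem_powR (q - 1) x x1.
have mf : measurable_fun `[e, 1[ (EFin \o fun w : R => (1 - w) `^ (q - 1)).
  apply/measurable_EFinP; apply/measurable_fun_itv_obnd_cbndP.
  apply: open_continuous_measurable_fun.
    exact: interval_open.
  by move=> x; rewrite inE/= in_itv/= => /andP[_ x1]; exact: cf.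
rewrite -integral_itv_bndo_bndc //.
have h1 : forall x, e <= x < 1 -> 0 <= (1 - x) `^ (q - 1) by move=> x _; rewrite powR_ge0.
have h2 : forall x, e <= x < 1 -> (fun w : R => (1 - w) `^ (q - 1)) z @[z --> x] --> (1 - x) `^ (q - 1).
  by move=> x /andP[_ x1]; exact: cf.
have h3 : forall x, e <= x < 1 -> is_derive x 1 (fun w : R => (- q^-1) * (1 - w) `^ q) ((1 - x) `^ (q - 1)).
  move=> x /andP[_ x1].
  apply: (is_derive_eq (f' := (- q^-1) *: (- (q * (1 - x) `^ (q - 1))))).
    exact/is_deriveZ/is_derive_onem_powR.
  by rewrite /GRing.scale/= mulrNN mulrA mulVf ?mul1r // gt_eqF.
have h4 : (fun w : R => (- q^-1) * (1 - w) `^ q) x @[x --> 1^'-] --> (- q^-1) * (1 - 1) `^ q.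
  apply/cvg_at_leftP => u [u1 ucv].
  have H : (1 - u n) `^ q @[n --> \oo] --> 0.
    apply: ((cvg_at_rightP _ _ _).1 (powR_cvg0 q0) (fun n => 1 - u n)).
    split; first by move=> n; rewrite subr_gt0.
    by rewrite -(subrr 1); apply: cvgB; [exact: cvg_cst|exact: ucv].
  have := cvgM (cvg_cst (- q^-1)) H.
  rewrite mulr0 subrr powR0 ?gt_eqF// mulr0.
  by apply; exact: eventually_filter.
rewrite (improper_right _ _ _ _ e1 h1 h2 h3 h4).
by rewrite subrr powR0 ?gt_eqF// mulr0 sub0r mulNr opprK mulrC.
Qed.

Lemma S_int (p e : R) : 0 < p < 1 -> 0 < e < 1 ->
  let f := fun w : R => if w < e then - (1 / Num.sqrt w) else 1 / ((1 - w) `^ p) in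
  mu.-integrable `[0%R, 1%R] (EFin \o f) /\
  (\int[mu]_(x in `[0%R, 1%R]) (f x)%:E = (- (2 * Num.sqrt e) + (1 - e) `^ (1 - p) / (1 - p))%:E)%E.
Proof.
move=> /andP[p0 p1] /andP[e0 e1] f.
have U : [set` `[0%R, 1%R]] = [set` `[0%R, e[] `|` [set` `[e, 1%R]] :> set R.
  by apply: itv_bndbnd_setU; rewrite bnd_simp ltW.
have D : [disjoint [set` `[0%R, e[] & [set` `[e, 1%R]]] :> Prop.
  apply/disj_setPS => x [] /=; rewrite !in_itv/= => /andP[_ h] /andP[h' _].
  by move: (lt_le_trans h h'); rewrite ltxx.
have gE w : 1 / (1 - w) `^ p = (1 - w) `^ (- p) by rewrite powRN div1r.
have mA : measurable_fun `[0%R, e[ (EFin \o f).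
  apply/measurable_EFinP; apply/measurable_fun_itv_obnd_cbndP.
  have mA0 : measurable_fun `]0%R, e[ (fun w : R => - (1 / Num.sqrt w)).
    apply: open_continuous_measurable_fun; first exact: interval_open.
    move=> x; rewrite inE/= in_itv/= => /andP[x0 _].
    apply: cvgN.
    have -> : (fun w : R => 1 / Num.sqrt w) = (fun w => (Num.sqrt w)^-1).
      by apply/funext=> w; rewrite div1r.
    rewrite div1r; apply: continuousV; last exact: sqrt_continuous.
    by rewrite sqrtr_eq0 -ltNge.
  apply: eq_measurable_fun mA0 => x.
  by rewrite inE/= in_itv/= /f => /andP[_ ->].
have mB : measurable_fun `[e, 1%R] (EFin \o f).
  apply/measurable_EFinP.
  have mB0 : measurable_fun `[e, 1%R] (fun w : R => 1 / ((1 - w) `^ p)).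
    apply/measurable_fun_itv_bndo_bndcP; apply/measurable_fun_itv_obnd_cbndP.
    apply: open_continuous_measurable_fun; first exact: interval_open.
    move=> x; rewrite inE/= in_itv/= => /andP[_ x1].
    have -> : (fun w : R => 1 / (1 - w) `^ p) = (fun w => (1 - w) `^ (- p)).
      by apply/funext=> w; rewrite gE.
    apply: derivable_cvg.
    by have [] := is_derive_onem_powR (- p) x x1.
  apply: eq_measurable_fun mB0 => x.
  by rewrite inE/= in_itv/= /f => /andP[h _]; rewrite ltNge h.
have mU : measurable_fun [set` (`[0%R, 1%R] : interval R)] (EFin \o f).
  by rewrite U; apply/measurable_funU => //.
have IA' : (\int[mu]_(x in `[0%R, e[) (f x)%:E = (- (2 * Num.sqrt e))%:E)%E.
  rewrite EFinN -IA// -integral_ge0N; last first.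
    by move=> x _; rewrite lee_fin divr_ge0 ?sqrtr_ge0.
  apply: eq_integral => x; rewrite inE/= in_itv/= /f => /andP[_ ->].
  by rewrite EFinN.
have IB' : (\int[mu]_(x in `[e, 1%R]) (f x)%:E = ((1 - e) `^ (1 - p) / (1 - p))%:E)%E.
  rewrite -IB ?p0 ?e0//.
  apply: eq_integral => x; rewrite inE/= in_itv/= /f => /andP[h _].
  by rewrite ltNge h.
split; last first.
  rewrite U integral_setU //=; first by rewrite EFinD -IA' -IB'.
  by move: mU; rewrite U.
apply/integrableP; split => //.
rewrite U integral_setU //=; last first.
  have mU2 : measurable_fun [set` (`[0%R, 1%R] : interval R)] (fun x => `|(f x)%:E|)%E.
    exact: measurableT_comp.
  by move: mU2; rewrite U.
have A1 : (\int[mu]_(x in `[0%R, e[) (`|f x|)%:E = (2 * Num.sqrt e)%:E)%E.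
  rewrite -IA//; apply: eq_integral => x; rewrite inE/= in_itv/= /f => /andP[_ ->].
  by rewrite normrN ger0_norm // divr_ge0 ?sqrtr_ge0.
have A2 : (\int[mu]_(x in `[e, 1%R]) (`|f x|)%:E = ((1 - e) `^ (1 - p) / (1 - p))%:E)%E.
  rewrite -IB ?p0 ?e0//.
  apply: eq_integral => x; rewrite inE/= in_itv/= /f => /andP[h _].
  by rewrite ltNge h /= ger0_norm // divr_ge0 ?powR_ge0.
apply: (@le_lt_trans _ _ ((2 * Num.sqrt e)%:E + ((1 - e) `^ (1 - p) / (1 - p))%:E)%E).
  by rewrite -A1 -A2.
by rewrite -EFinD ltry.
Qed.

Lemma exists_c (n : nat) : (0 < n)%N ->
  let p := 1 / (n%:R + 1) : R in
  exists c : R, [/\ 0 < c, c < 1,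
    - (2 * Num.sqrt c) + (1 - c) `^ (1 - p) / (1 - p) = 1 & c <= n%:R^-1].
Proof.
move=> n0 p.
have nr1 : 1 <= n%:R :> R by rewrite ler1n.
have p0 : 0 < p by rewrite /p divr_gt0 // ltr_wpDl.
have p2 : p <= 2^-1.
  rewrite /p div1r lef_pV2 ?posrE ?ltr_wpDl //.
  by rewrite (_ : 2 = 1 + 1) // lerD2r.
set q := 1 - p.
have q0 : 0 < q by rewrite /q subr_gt0 (le_lt_trans p2) // invf_lt1 // ltr1n.
have q1 : q < 1 by rewrite /q ltrBlDr ltrDl.
have qE : q^-1 = 1 + n%:R^-1.
  have n0' : n%:R != 0 :> R by rewrite pnatr_eq0 -lt0n.
  have n1' : n%:R + 1 != 0 :> R by rewrite gt_eqF // ltr_wpDl.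
  rewrite /q /p; field.
  by rewrite n0' n1'.
pose g (e : R) := - (2 * Num.sqrt e) + (1 - e) `^ q / q.
have gc : {within `[0, 9/16], continuous g}.
  apply: continuous_in_subspaceT => x; rewrite inE/= in_itv/= => /andP[_ x1].
  have x1' : x < 1 by rewrite (le_lt_trans x1) // ltr_pdivrMr // mul1r ltr_nat.
  apply: cvgD.
    apply: cvgN; apply: cvgM; [exact: cvg_cst|exact: sqrt_continuous].
  apply: cvgM; last exact: cvg_cst.
  apply: derivable_cvg.
  by have [] := is_derive_onem_powR q x x1'.
have A1 a : 0 < a <= 1 -> a `^ q <= 1.
  move=> a01; rewrite -(powRr0 a); apply: ger_powR => //; exact: ltW.
have g0 : 1 < g 0.
  by rewrite /g sqrtr0 mulr0 oppr0 add0r addr0 powR1 div1r invf_gt1.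
have g9 : g (9/16) <= 1.
  have s : Num.sqrt (9/16) = 3/4 :> R.
    rewrite (_ : 9/16 = (3/4)^+2); last by field.
    by rewrite sqrtr_sqr ger0_norm.
  have hA := A1 (1 - 9/16) _.
  have hA0 : 0 <= (1 - 9/16) `^ q :> R by exact: powR_ge0.
  have hq : q^-1 <= 2.
    by rewrite qE (_ : 2 = 1 + 1) // lerD2l invf_le1 // ltr0n.
  have hq0 : 0 < q^-1 by rewrite invr_gt0.
  rewrite /g s.
  have := hA; move/(_ _)=> hA'.
  have : (1 - 9/16) `^ q <= 1 :> R by apply: hA'; apply/andP; split; lra.
  nra.
have le916 : (0 : R) <= 9/16 by rewrite divr_ge0.
have mm : Num.min (g 0) (g (9/16)) <= 1 <= Num.max (g 0) (g (9/16)).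
  by rewrite ge_min le_max g9 (ltW g0) orbT.
have [c c01 gc1] := @IVT R g 0 (9/16) 1 le916 gc mm.
move: c01; rewrite in_itv/= => /andP[c0 c9].
have c1 : c < 1 by rewrite (le_lt_trans c9) // ltr_pdivrMr // mul1r ltr_nat.
have cpos : 0 < c.
  rewrite lt_neqAle c0 andbT; apply/eqP => c0'.
  by move: g0; rewrite c0' gc1 ltxx.
exists c; split => //.
have sc : Num.sqrt c ^+ 2 = c by rewrite sqr_sqrtr.
have s0 : 0 <= Num.sqrt c by exact: sqrtr_ge0.
have hA : (1 - c) `^ q <= 1 by apply: A1; rewrite subr_gt0 c1 /= lerBlDr lerDl ltW.
have hA0 : 0 <= (1 - c) `^ q by exact: powR_ge0.
have rn : n%:R^-1 <= 1 :> R by rewrite invf_le1 // ltr0n.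
have rn0 : 0 < n%:R^-1 :> R by rewrite invr_gt0 ltr0n.
move: gc1; rewrite /g qE => gc1.
rewrite -sc.
set S := Num.sqrt c in s0 gc1 *.
set A := (1 - c) `^ q in hA hA0 gc1.
set r := n%:R^-1 in rn rn0 gc1 *.
have Ar : A * r <= r by rewrite ler_piMl // ltW.
have h2 : 2 * S <= r by lra.
have h3 : S * S <= S * r by rewrite ler_wpM2l //; lra.
rewrite expr2; nra.
Qed.
End H.

Theorem lemma6p1 (R : realType) :
  exists eps : nat -> R,
    (forall n : nat, (0 < n)%N ->
       [/\ 0 < eps n, eps n < 1,
           (@lebesgue_measure R).-integrable `[0, 1] (EFin \o S1 n (eps n)) &
           (\int[@lebesgue_measure R]_(w in `[0%R, 1%R] : set R) (S1 n (eps n) w)%:E = 1%:E)%E])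
    /\ eps @ \oo --> (0 : R^o).
Proof.
have key : forall n : nat, exists e : R, 0 <= e /\ ((0 < n)%N ->
    [/\ 0 < e, e < 1,
        (@lebesgue_measure R).-integrable `[0, 1] (EFin \o S1 n e) &
        (\int[@lebesgue_measure R]_(w in `[0%R, 1%R] : set R) (S1 n e w)%:E = 1%:E)%E]
    /\ e <= n%:R^-1).
  move=> n; have [n0|n0] := posnP n.
    by exists 0; split => //; rewrite n0.
  case: (@exists_c R n n0) => c [c0 c1 gc cn].
  set p := 1 / (n%:R + 1) : R.
  have nr1 : 1 <= n%:R :> R by rewrite ler1n.
  have p0 : 0 < p by rewrite /p divr_gt0 // ltr_wpDl.
  have p1 : p < 1.
    rewrite /p ltr_pdivrMr; last by rewrite ltr_wpDl.
    rewrite mul1r; lra.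
  have pp : 0 < p < 1 by rewrite p0 p1.
  have cc : 0 < c < 1 by rewrite c0 c1.
  have [I1 I2] := @S_int R p c pp cc.
  exists c; split; first exact: ltW.
  move=> _; split => //; split => //.
  by rewrite I2 gc.
have [eps Heps] := choice key.
exists eps; split.
  by move=> n n0; have [_ /(_ n0) []] := Heps n.
apply/cvgrPdist_lt => e e0; near=> i.
rewrite sub0r normrN.
near: i; exists (Num.truncn e^-1).+1 => // i /= hi.
have i0 : (0 < i)%N by apply: leq_trans hi.
have [ge0 /(_ i0) [_ ile]] := Heps i.
rewrite ger0_norm //; apply: (le_lt_trans ile).
rewrite invf_plt ?posrE ?ltr0n //.
apply: (lt_le_trans (truncnS_gt _)); by rewrite ler_nat.
Unshelve. all: by end_near.
Qed.
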